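(* Let $X$ be a finite set and $D$ a directed distance on $X$. Then the tight-span $T_D$ is a tree if and only if $D$ has an oriented tree realisation $(\Gamma,\alpha,\mathcal{F})$ such that $\Gamma$ is a directed path.
   Context: A directed distance on $X$ is a map $D:X\times X\to\mathbb{R}_{\ge0}$ with $D(x,x)=0$ (not necessarily symmetric). Let $X_l,X_r$ be two disjoint copies of $X$ (write $x_l,x_r$ for the copies of $x$). $P_D=\{f\in\mathbb{R}^{X_l\cup X_r}:f\ge0,\ f(x_l)+f(y_r)\ge D(x,y)\ \forall x,y\in X\}$ and $T_D$ is the set of minimal elements of $P_D$ for the coordinatewise order; $T_D$ is a polyhedral complex (the union of bounded faces of $P_D$), and ''$T_D$ is a tree'' means it has dimension at most $1$. An oriented tree $\Gamma$ is a directed graph whose underlying undirected graph is a tree; with edge lengths $\alpha:E(\Gamma)\to\mathbb{R}_{\ge0}$, $D_{\Gamma,\alpha}(u,v)$ is the sum of $\alpha(e)$ over edges on the undirected $u$–$v$ path directed from $u$ towards $v$, and $D_{\Gamma,\alpha}(U,W)=\min_{u\in U,w\in W}D_{\Gamma,\alpha}(u,w)$. $(\Gamma,\alpha,\mathcal{F})$, $\mathcal{F}=\{F_x:x\in X\}$ subtrees of $\Gamma$, is an oriented tree realisation of $D$ if $D(x,y)=D_{\Gamma,\alpha}(F_x,F_y)$ for all $x,y$. $\Gamma$ is a directed path if its underlying tree is a path and all edges are oriented in the same direction along it. *)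

(* Defs.v *)
From HB Require Import structures.
From mathcomp Require Import all_boot all_order all_algebra.
Set Implicit Arguments. Unset Strict Implicit. Unset Printing Implicit Defensive.
Import Order.TTheory GRing.Theory Num.Theory.
Local Open Scope ring_scope.

Section TightSpan.
Variables (R : realFieldType) (X : finType) (D : X -> X -> R).

Definition directed_distance := (forall x y, 0 <= D x y) /\ (forall x, D x x = 0).

(* Points of R^{X_l \cup X_r}: functions on X + X; inl x = x_l, inr x = x_r. *)
Definition in_PD (f : X + X -> R) : Prop :=
  (forall z, 0 <= f z) /\ (forall x y, D x y <= f (inl x) + f (inr y)).

Definition in_TD (f : X + X -> R) : Prop :=
  in_PD f /\ forall g, in_PD g -> (forall z, g z <= f z) -> g = f.

Definition in_face (S0 : pred (X + X)) (S1 : pred (X * X)) (f : X + X -> R) : Prop :=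
  in_PD f /\ (forall z, S0 z -> f z = 0) /\
  (forall x y, S1 (x, y) -> f (inl x) + f (inr y) = D x y).

Definition face_bounded S0 S1 : Prop :=
  exists M : R, forall f, in_face S0 S1 f -> forall z, `|f z| <= M.

Definition aff_indep3 (p0 p1 p2 : X + X -> R) : Prop :=
  forall a b : R, (forall z, a * (p1 z - p0 z) + b * (p2 z - p0 z) = 0) -> a = 0 /\ b = 0.

Definition face_dim_le1 S0 S1 : Prop :=
  forall p0 p1 p2, in_face S0 S1 p0 -> in_face S0 S1 p1 -> in_face S0 S1 p2 ->
    ~ aff_indep3 p0 p1 p2.

(* T_D is a tree: the polyhedral complex T_D (whose cells are the bounded
   faces of P_D) has dimension at most 1. *)
Definition TD_is_tree : Prop :=
  forall S0 S1, face_bounded S0 S1 -> face_dim_le1 S0 S1.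

End TightSpan.

Section OrientedTree.
Variables (R : realFieldType) (V : finType) (E : rel V).

Definition adj : rel V := fun u v => E u v || E v u.

Definition upath (u w : V) (p : seq V) : bool :=
  [&& path adj u p, last u p == w & uniq (u :: p)].

Definition oriented_tree : Prop :=
  (0 < #|V|)%N /\ (forall u, ~~ E u u) /\ (forall u v, ~~ (E u v && E v u)) /\
  (forall u w, exists p, upath u w p /\ forall q, upath u w q -> q = p).

Fixpoint fwd_len (alpha : V -> V -> R) (u : V) (p : seq V) : R :=
  match p with
  | [::] => 0
  | v :: p' => (if E u v then alpha u v else 0) + fwd_len alpha v p'
  end.

Definition tree_dist (alpha : V -> V -> R) (u w : V) (d : R) : Prop :=
  exists p, upath u w p /\ fwd_len alpha u p = d.

Definition subtree (F : {set V}) : Prop :=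
  F != set0 /\
  forall u w, u \in F -> w \in F -> exists p, upath u w p /\ all (fun v => v \in F) p.

Definition directed_path : Prop :=
  exists s : seq V, uniq s /\ (forall v, v \in s) /\
    forall u v, E u v <-> exists i, (i.+1 < size s)%N /\ nth u s i = u /\ nth u s i.+1 = v.

Definition set_dist (alpha : V -> V -> R) (U W : {set V}) (d : R) : Prop :=
  (exists u w, u \in U /\ w \in W /\ tree_dist alpha u w d) /\
  (forall u w d', u \in U -> w \in W -> tree_dist alpha u w d' -> d <= d').

End OrientedTree.

Definition oriented_tree_realisation (R : realFieldType) (X V : finType)
    (D : X -> X -> R) (E : rel V) (alpha : V -> V -> R) (F : X -> {set V}) : Prop :=
  oriented_tree E /\ (forall u v, E u v -> 0 <= alpha u v) /\
  (forall x, subtree E (F x)) /\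
  (forall x y, set_dist E alpha (F x) (F y) (D x y)).

(* Main.v *)
Require Import Defs.
From HB Require Import structures.
From mathcomp Require Import all_boot all_order all_algebra.
From mathcomp Require Import zify ring lra.
Import Order.TTheory GRing.Theory Num.Theory.
Local Open Scope ring_scope.
Set Implicit Arguments. Unset Strict Implicit. Unset Printing Implicit Defensive.

Definition natadj (a b : nat) := (b == a.+1) || (a == b.+1).

Lemma last_iota m k : last m (iota m.+1 k) = (m + k)%N.
Proof. elim: k m => [|k IH] m /=; first by rewrite addn0. by rewrite IH addnS. Qed.

Lemma last_dec i k : last i [seq (i - t)%N | t <- iota 1 k] = (i - k)%N.
Proof.
have := @last_map _ _ (fun t => (i - t)%N) (iota 1 k) 0%N.
rewrite subn0 => ->. by rewrite last_iota add0n.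
Qed.

Lemma nat_upath i L : path natadj i L -> uniq (i :: L) ->
  L = iota i.+1 (size L) \/ ((size L <= i)%N /\ L = [seq (i - t)%N | t <- iota 1 (size L)]).
Proof.
elim: L i => [|a L IH] i; first by left.
rewrite /= => /andP[hia hp] /andP[hi hu].
have hu' : uniq (a :: L) by exact: hu.
have [hL|[hs hL]] := IH a hp hu'.
- move: hia; rewrite /natadj => /orP[/eqP ha|/eqP ha].
  + left; subst a; by rewrite -hL.
  + case: L hL hp hu hi {IH hu'} => [|b L] hL hp hu hi.
      right; split; first by rewrite /=; lia. by rewrite /= ha subSS subn0.
    exfalso; move/negP: hi; apply; rewrite hL ha /= !inE eqxx; by rewrite orbT.
- move: hia; rewrite /natadj => /orP[/eqP ha|/eqP ha].
  + case: L hL hs hp hu hi {IH hu'} => [|b L] hL hs hp hu hi.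
      by left; rewrite ha.
    exfalso; move/negP: hi; apply; rewrite hL ha /= !inE.
    have -> : (i.+1 - 1 = i)%N by lia. by rewrite eqxx orbT.
  + right; split; first by rewrite /=; lia.
    rewrite /= hL ha subSS subn0; congr cons.
    rewrite size_map size_iota.
    have -> : iota 2 (size L) = map (addn 1) (iota 1 (size L)) by rewrite -iotaDl.
    rewrite -map_comp; apply: eq_map => t /=; lia.
Qed.

Definition seg (i j : nat) := if (i <= j)%N then iota i.+1 (j - i)
  else [seq (i - t)%N | t <- iota 1 (i - j)].

Lemma nat_upath_last i j L : path natadj i L -> uniq (i :: L) -> last i L = j -> L = seg i j.
Proof.
move=> hp hu hl; rewrite /seg.
have [hL|[hs hL]] := nat_upath hp hu.
- have hj := hl; rewrite {1}hL last_iota in hj.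
  have -> : (i <= j)%N by lia.
  by rewrite {1}hL; congr iota; lia.
- have hj := hl; rewrite {1}hL last_dec in hj.
  case: leqP => hij.
    have h0 : size L = 0%N by lia.
    by rewrite {1}hL h0 /=; have -> : (j - i = 0)%N by lia.
  by rewrite {1}hL; congr map; congr iota; lia.
Qed.

Lemma mem_seg i j k : k \in seg i j -> (minn i j <= k <= maxn i j)%N.
Proof.
rewrite /seg; case: leqP => h.
  rewrite mem_iota => hk; lia.
move/mapP=> [t]; rewrite mem_iota => ht ->; lia.
Qed.

Section DPath.
Variables (R : realFieldType) (V : finType) (E : rel V) (s : seq V) (x0 : V).
Hypotheses (Hu : uniq s) (Hall : forall v, v \in s)
 (HE : forall u v, E u v <-> exists i, (i.+1 < size s)%N /\ nth u s i = u /\ nth u s i.+1 = v).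

Local Notation idx v := (index v s).

Lemma idx_lt v : (idx v < size s)%N.
Proof. by rewrite index_mem. Qed.

Lemma idx_inj : injective (fun v => idx v).
Proof.
move=> u v h. by rewrite -(nth_index x0 (Hall u)) h nth_index.
Qed.

Lemma nth_idx k : (k < size s)%N -> idx (nth x0 s k) = k.
Proof. move=> hk; exact: index_uniq. Qed.

Lemma E_idx u v : E u v <-> idx v = (idx u).+1.
Proof.
split.
  move/HE=> [i [hi [hu hv]]].
  have hu' : nth x0 s i = u by rewrite -hu; apply: set_nth_default; lia.
  have hv' : nth x0 s i.+1 = v by rewrite -hv; apply: set_nth_default.
  by rewrite -hu' -hv' !nth_idx //; lia.
move=> h; apply/HE; exists (idx u); split; first by rewrite -h idx_lt.
by rewrite nth_index // -h nth_index.
Qed.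

Lemma Eb u v : E u v = (idx v == (idx u).+1).
Proof. by apply/idP/eqP => /E_idx. Qed.

Lemma adj_idx u v : adj E u v = natadj (idx u) (idx v).
Proof. by rewrite /adj /natadj !Eb. Qed.

Lemma upath_idx u w p : upath E u w p -> map (fun v => idx v) p = seg (idx u) (idx w).
Proof.
move=> /and3P[hp /eqP hl hu].
apply: nat_upath_last.
- change (path natadj ((fun v => index v s) u) [seq (fun v => index v s) v | v <- p]).
  rewrite path_map (@eq_path _ _ (adj E)) // => a b /=; by rewrite adj_idx.
- by rewrite -(map_cons (fun v => idx v)) map_inj_uniq //; exact: idx_inj.
- by rewrite (@last_map _ _ (fun v => index v s) p u) hl.
Qed.

Lemma upath_uniq u w p q : upath E u w p -> upath E u w q -> p = q.
Proof.
move=> hp hq; apply: (inj_map idx_inj). by rewrite (upath_idx hp) (upath_idx hq).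
Qed.

Lemma upath_between u w p v : upath E u w p -> v \in p ->
  (minn (idx u) (idx w) <= idx v <= maxn (idx u) (idx w))%N.
Proof.
move=> hp hv; apply: mem_seg; rewrite -(upath_idx hp).
by apply: map_f.
Qed.

Lemma path_E_iota m k : (m + k < size s)%N -> path E (nth x0 s m) [seq nth x0 s j | j <- iota m.+1 k].
Proof.
elim: k m => [|k IH] m hk //=.
rewrite IH; last by lia.
by rewrite andbT Eb !nth_idx //; lia.
Qed.

Lemma canon_inc u w : (idx u <= idx w)%N -> exists p, [/\ path E u p, last u p = w & uniq (u :: p)].
Proof.
move=> huw; exists [seq nth x0 s j | j <- iota (idx u).+1 (idx w - idx u)].
have hu : nth x0 s (idx u) = u by rewrite nth_index.
have hw := idx_lt w.
split.
- rewrite -{1}hu; apply: path_E_iota; lia.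
- rewrite -{1}hu last_map last_iota.
  have -> : (idx u + (idx w - idx u) = idx w)%N by lia.
  by rewrite nth_index.
- rewrite -{1}hu -map_cons.
  have -> : idx u :: iota (idx u).+1 (idx w - idx u) = iota (idx u) (idx w - idx u).+1 by [].
  rewrite map_inj_in_uniq ?iota_uniq //.
  move=> a b; rewrite !mem_iota => ha hb /eqP; rewrite nth_uniq //; [by move/eqP| |]; move: ha hb hw; rewrite /=; lia.
Qed.

Definition pos (alpha : V -> V -> R) v := \sum_(k < idx v) alpha (nth x0 s k) (nth x0 s k.+1).

Lemma pos_step (alpha : V -> V -> R) u v : E u v -> pos alpha v = pos alpha u + alpha u v.
Proof.
move=> /E_idx h; rewrite /pos h big_ord_recr /= nth_index //.
by rewrite -h nth_index.
Qed.

Lemma fwd_E (alpha : V -> V -> R) u p : path E u p -> fwd_len E alpha u p = pos alpha (last u p) - pos alpha u.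
Proof.
elim: p u => [|v p IH] u /=; first by rewrite subrr.
move=> /andP[huv hp]; rewrite huv IH // (pos_step _ huv); lra.
Qed.

Lemma fwd_rE (alpha : V -> V -> R) u p : path (fun a b => E b a) u p -> fwd_len E alpha u p = 0.
Proof.
elim: p u => [|v p IH] u //=.
move=> /andP[huv hp]; rewrite IH //.
have -> : E u v = false.
  apply/negbTE/negP => h; move: huv h; rewrite !Eb => /eqP h1 /eqP h2; lia.
by rewrite add0r.
Qed.

Variable alpha : V -> V -> R.
Hypothesis Ha : forall a b, E a b -> 0 <= alpha a b.

Lemma fwd_ge0 u p : path E u p -> 0 <= fwd_len E alpha u p.
Proof.
elim: p u => [|v p IH] u //= /andP[huv hp]; rewrite huv.
by apply: addr_ge0; [exact: Ha|exact: IH].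
Qed.

Lemma canon u w : exists p, upath E u w p /\ fwd_len E alpha u p = Num.max 0 (pos alpha w - pos alpha u).
Proof.
have subadj : forall a b, E a b -> adj E a b by move=> a b h; rewrite /adj h.
case: (leqP (idx u) (idx w)) => h.
  have [p [hp hl hu]] := canon_inc h.
  exists p; split; first by rewrite /upath (sub_path subadj hp) hl eqxx hu.
  have h0 := fwd_ge0 hp.
  rewrite (fwd_E _ hp) hl in h0 *; by rewrite (max_idPr h0).
have [q [hq hl hu]] := canon_inc (ltnW h).
exists (rev (belast w q)).
have hr : path (fun a b => E b a) u (rev (belast w q)).
  by rewrite -hl rev_path.
have hrev : u :: rev (belast w q) = rcons (rev q) w.
  by rewrite -rev_rcons -hl -lastI rev_cons.
split.
  rewrite /upath; apply/and3P; split.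
  - move: hr; apply: sub_path => a b hab; by rewrite /adj hab orbT.
  - by rewrite -(last_cons w) hrev last_rcons.
  - by rewrite hrev -rev_cons rev_uniq.
rewrite (fwd_rE _ hr).
have h0 := fwd_ge0 hq; rewrite (fwd_E _ hq) hl in h0.
by rewrite (max_idPl _) //; lra.
Qed.

Lemma tree_dist_iff u w d : tree_dist E alpha u w d <-> d = Num.max 0 (pos alpha w - pos alpha u).
Proof.
have [p0 [hp0 hf0]] := canon u w.
split.
  move=> [p [hp <-]]; by rewrite (upath_uniq hp hp0).
move=> ->; by exists p0.
Qed.

End DPath.

Section Gen.
Variable R : realFieldType.

Lemma ex_argmin (T : finType) (P : pred T) (g : T -> R) t0 : P t0 ->
  exists m, P m /\ forall x, P x -> g m <= g x.
Proof. move=> h; case: (arg_minP g h) => m hm hmin; by exists m. Qed.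

Lemma ex_argmax (T : finType) (P : pred T) (g : T -> R) t0 : P t0 ->
  exists m, P m /\ forall x, P x -> g x <= g m.
Proof. move=> h; case: (arg_maxP g h) => m hm hmin; by exists m. Qed.

Lemma max0E (a : R) : Num.max 0 a = if 0 <= a then a else 0.
Proof. by rewrite maxEle. Qed.

Lemma max0_ge0 (a : R) : 0 <= Num.max 0 a.
Proof. rewrite max0E; case: ifP => //; lra. Qed.

Lemma max0_ge (a : R) : a <= Num.max 0 a.
Proof. rewrite max0E; case: ifP => // /negbT; rewrite -ltNge; lra. Qed.

Lemma max0_mono (a b : R) : a <= b -> Num.max 0 a <= Num.max 0 b.
Proof. rewrite !max0E; case: ifP; case: ifP => // /negbT; rewrite -?ltNge; try lra. Qed.

Lemma tight_split (t a b : R) :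
  Num.max 0 (t - a) + Num.max 0 (b - t) = Num.max 0 (b - a) ->
  (b <= a /\ Num.max 0 (t - a) = 0 /\ Num.max 0 (b - t) = 0) \/
  (a < b /\ Num.max 0 (t - a) = t - a /\ Num.max 0 (b - t) = b - t).
Proof.
rewrite !max0E; case: (lerP 0 (t - a)) => h1; case: (lerP 0 (b - t)) => h2;
  case: (lerP 0 (b - a)) => h3 h.
all: case: (ltrP a b) => h4; first [left; repeat split; lra | right; repeat split; lra | exfalso; lra].
Qed.
End Gen.

Section TreeOfRep.
Variables (R : realFieldType) (X : finType) (D : X -> X -> R) (l r : X -> R).
Hypothesis hD : forall x y, D x y = Num.max 0 (l y - r x).

Definition covered (S0 : pred (X + X)) (S1 : pred (X * X)) (z : X + X) : bool :=
  S0 z || (match z with inl x => [exists y, S1 (x, y)] | inr y => [exists x, S1 (x, y)] end).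

Lemma cov_of_bounded (D' : X -> X -> R) S0 S1 p : in_face D' S0 S1 p -> face_bounded D' S0 S1 ->
  forall z, covered S0 S1 z.
Proof.
move=> [[hp0 hpD] [hS0 hS1]] [M hM] z; apply/negPn/negP => hz.
pose f := fun z' => if z' == z then p z + (`|M| + 1) else p z'.
have hM0 : 0 <= `|M| by [].
have hfp : forall z', p z' <= f z'.
  move=> z'; rewrite /f; case: eqP => [->|_]; lra.
have hS0z : ~~ S0 z by move: hz; rewrite /covered negb_or => /andP[].
have hf : in_face D' S0 S1 f.
  split; first split.
  - move=> z'; rewrite /f; case: eqP => _; have := hp0 z'; have := hp0 z; lra.
  - move=> x y; have := hpD x y; have := hfp (inl x); have := hfp (inr y); lra.
  split.
  - move=> z' hz'; rewrite /f; case: eqP => [e|_]; last exact: hS0.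
    by subst z'; move: hS0z; rewrite hz'.
  - move=> x y hxy; rewrite /f.
    case: eqP => [e|_].
      exfalso; subst z; move: hz; rewrite /covered negb_or => /andP[_ /negP]; apply.
      by apply/existsP; exists y.
    case: eqP => [e|_].
      exfalso; subst z; move: hz; rewrite /covered negb_or => /andP[_ /negP]; apply.
      by apply/existsP; exists x.
    exact: hS1.
have := hM f hf z; rewrite /f eqxx.
have := hp0 z; have := ler_norm M => h1 h2.
rewrite ger0_norm; last lra.
lra.
Qed.

Lemma ft f : in_PD D f ->
  (forall x, f (inl x) = 0 \/ exists y, f (inl x) + f (inr y) = D x y) ->
  (forall y, f (inr y) = 0 \/ exists x, f (inl x) + f (inr y) = D x y) ->
  exists t, forall x, f (inl x) = Num.max 0 (t - r x) /\ f (inr x) = Num.max 0 (l x - t).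
Proof.
move=> [hp0 hpD] hl hr.
case: (pickP (fun _ : X => true)) => [x1 _|hn]; last by exists 0 => x; have := hn x.
have [xm [_ hxm]] := @ex_argmin _ _ predT (fun x => r x + f (inl x)) x1 erefl.
exists (r xm + f (inl xm)); set t := r xm + f (inl xm).
have hfeas : forall z y, l y - f (inr y) <= r z + f (inl z).
  move=> z y; have := hpD z y; have := max0_ge (l y - r z); rewrite -hD; lra.
have hbeta : forall y, l y - f (inr y) <= t := hfeas xm.
have halpha : forall x, t <= r x + f (inl x) := fun x => hxm x erefl.
move=> x; split.
- have := halpha x; have := hp0 (inl x).
  case: (hl x) => [e|[y e]] ha h0.
    rewrite e max0E; case: lerP => h; lra.
  have := hbeta y; have := hp0 (inr y).
  move: e; rewrite hD max0E; case: lerP => h e hb hy.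
    rewrite max0E; case: lerP => h'; lra.
  have e0 : f (inl x) = 0 by lra.
  rewrite e0 max0E; case: lerP => h'; lra.
- have := hbeta x; have := hp0 (inr x).
  case: (hr x) => [e|[y e]] ha h0.
    rewrite e max0E; case: lerP => h; lra.
  have := halpha y; have := hp0 (inl y).
  move: e; rewrite hD max0E; case: lerP => h e hb hy.
    rewrite max0E; case: lerP => h'; lra.
  have e0 : f (inr x) = 0 by lra.
  rewrite e0 max0E; case: lerP => h'; lra.
Qed.

Lemma face_ft S0 S1 f : in_face D S0 S1 f -> (forall z, covered S0 S1 z) ->
  exists t, forall x, f (inl x) = Num.max 0 (t - r x) /\ f (inr x) = Num.max 0 (l x - t).
Proof.
move=> [hP [hS0 hS1]] hc; apply: ft => //.
- move=> x; case/orP: (hc (inl x)) => [h|/existsP[y hy]]; first by left; exact: hS0.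
  by right; exists y; exact: hS1.
- move=> y; case/orP: (hc (inr y)) => [h|/existsP[x hx]]; first by left; exact: hS0.
  by right; exists x; exact: hS1.
Qed.

Lemma tree_of_rep : TD_is_tree D.
Proof.
move=> S0 S1 hb p0 p1 p2 h0 h1 h2 hind.
have hc := cov_of_bounded h0 hb.
have [t0 e0] := face_ft h0 hc.
have [t1 e1] := face_ft h1 hc.
have [t2 e2] := face_ft h2 hc.
have col : forall z, (p1 z - p0 z) * (t2 - t0) = (p2 z - p0 z) * (t1 - t0).
  move=> z; case/orP: (hc z) => [hs|].
    by rewrite h0.2.1 // h1.2.1 // h2.2.1 //; ring.
  case: z => [x|y] /existsP [w hw].
  + have k0 := h0.2.2 _ _ hw; have k1 := h1.2.2 _ _ hw; have k2 := h2.2.2 _ _ hw.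
    rewrite (e0 x).1 (e0 w).2 hD in k0; rewrite (e1 x).1 (e1 w).2 hD in k1;
    rewrite (e2 x).1 (e2 w).2 hD in k2.
    rewrite (e0 x).1 (e1 x).1 (e2 x).1.
    case: (tight_split k0) => [[a0 [b0 c0]]|[a0 [b0 c0]]];
    case: (tight_split k1) => [[a1 [b1 c1]]|[a1 [b1 c1]]];
    case: (tight_split k2) => [[a2 [b2 c2]]|[a2 [b2 c2]]]; try (exfalso; lra).
      by rewrite b0 b1 b2; ring.
    by rewrite b0 b1 b2; ring.
  + have k0 := h0.2.2 _ _ hw; have k1 := h1.2.2 _ _ hw; have k2 := h2.2.2 _ _ hw.
    rewrite (e0 w).1 (e0 y).2 hD in k0; rewrite (e1 w).1 (e1 y).2 hD in k1;
    rewrite (e2 w).1 (e2 y).2 hD in k2.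
    rewrite (e0 y).2 (e1 y).2 (e2 y).2.
    case: (tight_split k0) => [[a0 [b0 c0]]|[a0 [b0 c0]]];
    case: (tight_split k1) => [[a1 [b1 c1]]|[a1 [b1 c1]]];
    case: (tight_split k2) => [[a2 [b2 c2]]|[a2 [b2 c2]]]; try (exfalso; lra).
      by rewrite c0 c1 c2; ring.
    by rewrite c0 c1 c2; ring.
have [ha hb'] : t2 - t0 = 0 /\ t0 - t1 = 0.
  apply: hind => z.
  have -> : (t2 - t0) * (p1 z - p0 z) = (p1 z - p0 z) * (t2 - t0) by ring.
  rewrite col; ring.
have [] := hind 1 0.
  move=> z; case: z => [x|y].
    rewrite (e0 x).1 (e1 x).1; have -> : t1 = t0 by lra. ring.
  rewrite (e0 y).2 (e1 y).2; have -> : t1 = t0 by lra. ring.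
move=> /eqP; by rewrite oner_eq0.
Qed.

End TreeOfRep.

Lemma rep_of_real (R : realFieldType) (X V : finType) (D : X -> X -> R) (E : rel V)
  (alpha : V -> V -> R) (F : X -> {set V}) :
  oriented_tree_realisation D E alpha F -> directed_path E ->
  exists l r : X -> R, forall x y, D x y = Num.max 0 (l y - r x).
Proof.
move=> [[hcard _] [Ha [hsub hset]]] [s [hu [hall hE]]].
case/card_gt0P: hcard => x0 _.
pose ps := pos s x0 alpha.
have td := tree_dist_iff x0 hu hall hE Ha.
have hr : forall x, exists m, (exists u, u \in F x /\ ps u = m) /\ forall u, u \in F x -> ps u <= m.
  move=> x; have [u0 hu0] := set0Pn _ (hsub x).1.
  have [m [hm hmax]] := @ex_argmax _ _ (mem (F x)) ps u0 hu0.
  by exists (ps m); split; [exists m|].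
have hl : forall x, exists m, (exists u, u \in F x /\ ps u = m) /\ forall u, u \in F x -> m <= ps u.
  move=> x; have [u0 hu0] := set0Pn _ (hsub x).1.
  have [m [hm hmin]] := @ex_argmin _ _ (mem (F x)) ps u0 hu0.
  by exists (ps m); split; [exists m|].
have [r hr'] := fin_all_exists hr.
have [l hl'] := fin_all_exists hl.
exists l, r => x y.
have [[u [w [hu' [hw' hd]]]] hmin] := hset x y.
rewrite td in hd.
have [[ur [hur eur]] hrx] := hr' x.
have [[wl [hwl ewl]] hly] := hl' y.
apply/eqP; rewrite eq_le; apply/andP; split.
  apply: (hmin ur wl) => //; apply/td; by rewrite -eur -ewl.
rewrite hd; apply: max0_mono.
have := hrx u hu'; have := hly w hw'; rewrite /ps; lra.
Qed.

Section BigMax.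
Variables (R : realFieldType) (T : finType).

Lemma bm_ge0 (F : T -> R) : 0 <= \big[Num.max/0]_i F i.
Proof.
apply: (big_rec (fun m => 0 <= m)) => // i m _ hm.
rewrite maxEle; case: ifP => // /negbT; rewrite -ltNge => h; lra.
Qed.

Lemma bm_ge (F : T -> R) i : F i <= \big[Num.max/0]_j F j.
Proof. exact: le_bigmax. Qed.

Lemma bm_le (F : T -> R) m : 0 <= m -> (forall i, F i <= m) -> \big[Num.max/0]_j F j <= m.
Proof. move=> h0 h; apply: bigmax_le => // i _; exact: h. Qed.

Lemma bm_att (F : T -> R) : \big[Num.max/0]_j F j = 0 \/ exists i, \big[Num.max/0]_j F j = F i.
Proof.
apply: (big_ind (fun m => m = 0 \/ exists i, m = F i)); first by left.
  move=> a b ha hb; rewrite maxEle; by case: ifP.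
by move=> i _; right; exists i.
Qed.
End BigMax.

Lemma pigeon3 (T : finType) n (f : 'I_n -> T) : (2 * #|T| < n)%N ->
  exists i j k : 'I_n, [/\ i != j, j != k, i != k, f i = f j & f j = f k].
Proof.
move=> hn.
case H: [exists i, exists j, exists k, [&& i != j, j != k, i != k, f i == f j & f j == f k]].
  move/existsP: H => [i /existsP[j /existsP[k /and5P[h1 h2 h3 /eqP h4 /eqP h5]]]].
  by exists i, j, k.
exfalso.
pose g i := (f i, [exists j : 'I_n, (j < i)%N && (f j == f i)]).
have ginj : injective g.
  have key : forall i j : 'I_n, (i < j)%N -> g i = g j -> False.
    move=> i j hij [hf hb].
    have : [exists j0 : 'I_n, (j0 < j)%N && (f j0 == f j)].
      by apply/existsP; exists i; rewrite hij hf eqxx.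
    rewrite -hb => /existsP[k /andP[hki /eqP hk]].
    move/negbT: H => /negP; apply; apply/existsP; exists k; apply/existsP; exists i;
      apply/existsP; exists j.
    rewrite hk hf eqxx /= !andbT.
    apply/and3P; split; apply/negP => /eqP e; subst; clear -hij hki; lia.
  move=> i j e; case: (ltngtP i j) => h.
  - by exfalso; apply: (key i j).
  - by exfalso; apply: (key j i).
  - exact: val_inj.
have := @leq_card _ _ g ginj; rewrite card_prod card_bool card_ord; lia.
Qed.

Section Rep4.
Variables (R : realFieldType) (X : finType) (D : X -> X -> R).
Hypothesis hnn : forall x y, 0 <= D x y.
Hypothesis h4 : forall x y x' y', 0 < D x y -> 0 < D x' y' -> D x y + D x' y' <= D x y' + D x' y.

Let a x := \big[Num.max/0]_w D x w.
Let b y := \big[Num.max/0]_z D z y.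
Let K := \big[Num.max/0]_x a x.

Lemma rep_of_4pc : exists l r : X -> R, forall x y, D x y = Num.max 0 (l y - r x).
Proof.
exists (fun y => b y - K), (fun x => - a x) => x y.
have hDK : forall x y, D x y <= K.
  move=> x1 y1; apply: le_trans (bm_ge _ x1); exact: (bm_ge (D x1) y1).
have hK0 : 0 <= K by apply: bm_ge0.
apply/eqP; rewrite eq_le; apply/andP; split.
  case: (lerP (D x y) 0) => hxy.
    apply: le_trans (max0_ge0 _); exact: hxy.
  apply: le_trans (max0_ge _).
  case: (bm_att (fun x => a x)) => [hK0'|[x0 hx0]].
    have := hDK x y; rewrite /K hK0'; lra.
  case: (bm_att (D x0)) => [ha0|[y0 hy0]].
    have := hDK x y; rewrite /K hx0 /a ha0; lra.
  have hk : K = D x0 y0 by rewrite /K hx0 /a hy0.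
  have := h4 hxy (y':=y0) (x':=x0).
  rewrite -hk => h; have /h {}h : 0 < K by have := hDK x y; lra.
  have := bm_ge (D x) y0; have := bm_ge (fun z => D z y) x0; rewrite -/(a x) -/(b y) => h1 h2.
  lra.
rewrite max0E; case: (lerP 0 (b y - K - - a x)) => h; last exact: hnn.
have hax : a x <= D x y + K - b y.
  case: (bm_att (D x)) => [ha0|[w hw]].
    rewrite /a ha0; case: (bm_att (fun z => D z y)) => [hb0|[z hz]].
      rewrite -/(b y) in hb0; rewrite hb0; have := hnn x y; lra.
    rewrite -/(b y) in hz; rewrite hz; have := hnn x y; have := hDK z y; lra.
  rewrite /a hw; case: (bm_att (fun z => D z y)) => [hb0|[z hz]].
    rewrite -/(b y) in hb0; rewrite hb0; have := hnn x y; have := hDK x w; lra.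
  rewrite -/(b y) in hz; rewrite hz.
  case: (lerP (D x w) 0) => h1.
    have := hnn x y; have := hDK z y; lra.
  case: (lerP (D z y) 0) => h2.
    have := hnn x y; have := hDK x w; lra.
  have := h4 h1 h2; have := hDK z w; lra.
lra.
Qed.
End Rep4.

Lemma params (R : realFieldType) (A B C E : R) : 0 < A -> 0 < B -> 0 <= C -> 0 <= E ->
  C + E < A + B ->
  exists a0 b0 e : R, [/\ 0 <= a0, 0 <= b0, 0 < e, a0 + e <= A &
     [/\ b0 + e <= B, a0 - b0 + e <= A - C & E - B <= a0 - b0]].
Proof.
move=> hA hB hC hE h.
pose g := A + B - C - E.
pose e := Num.min (g / 2) (Num.min A B).
have he1 : e <= g / 2 by rewrite /e ge_min lexx.
have he2 : e <= A by rewrite /e ge_min; apply/orP; right; rewrite ge_min lexx.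
have he3 : e <= B by rewrite /e ge_min; apply/orP; right; rewrite ge_min lexx orbT.
have he0 : 0 < e by rewrite /e !lt_min hA hB andbT; rewrite /g; lra.
pose m := (A - B + E - C) / 2.
case: (lerP 0 m) => hm.
  exists m, 0, e; split; rewrite /m /g in hm he1 *; try lra.
  split; lra.
exists 0, (- m), e; split; rewrite /m /g in hm he1 *; try lra.
split; lra.
Qed.

Definition sp (R : realFieldType) (t : nat) : R := (1 + t%:R)^-1.

Lemma sp_bounds (R : realFieldType) t : 0 < sp R t /\ sp R t <= 1.
Proof.
have h : 0 < 1 + t%:R :> R by have := ler0n R t; lra.
split; first by rewrite /sp invr_gt0.
rewrite /sp invf_le1 //; have := ler0n R t; lra.
Qed.

Lemma sp_inj (R : realFieldType) m n : sp R m = sp R n -> m = n.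
Proof.
move=> /invr_inj /addrI /eqP; rewrite eqr_nat; by move/eqP.
Qed.

Section Tree4.
Variables (R : realFieldType) (X : finType) (D : X -> X -> R).
Hypothesis hnn : forall x y, 0 <= D x y.
Hypothesis htree : TD_is_tree D.
Variables (x y x' y' : X).
Hypothesis hA : 0 < D x y.
Hypothesis hB : 0 < D x' y'.
Hypothesis hviol : D x y' + D x' y < D x y + D x' y'.

Let bcol w := \big[Num.max/0]_z D z w.
Let vv (al be : R) w := if w == y then al else if w == y' then be else bcol w.
Let uu al be z := \big[Num.max/0]_w (D z w - vv al be w).
Let vp al be w := \big[Num.max/0]_z (D z w - uu al be z).
Let q al be : X + X -> R := fun z => match z with inl z => uu al be z | inr w => vp al be w end.

Lemma hxx : x != x'.
Proof. apply/eqP => e; subst x'; move: hviol; lra. Qed.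

Lemma hyy : y != y'.
Proof. apply/eqP => e; subst y'; move: hviol; lra. Qed.

Lemma q_PD al be : in_PD D (q al be).
Proof.
split; first by case=> z /=; apply: bm_ge0.
move=> z w /=; have := bm_ge (fun z0 => D z0 w - uu al be z0) z; rewrite -/(vp al be w); lra.
Qed.

Lemma vv_ge0 al be w : 0 <= al -> 0 <= be -> 0 <= vv al be w.
Proof. move=> h1 h2; rewrite /vv; case: eqP => // _; case: eqP => // _; exact: bm_ge0. Qed.

Lemma q_tight al be : 0 <= al -> 0 <= be ->
  (forall a, uu al be a = 0 \/ exists b, uu al be a + vp al be b = D a b) /\
  (forall b, vp al be b = 0 \/ exists a, uu al be a + vp al be b = D a b).
Proof.
move=> h1 h2; split.
  move=> a; case: (bm_att (fun w => D a w - vv al be w)) => [e|[w e]]; first by left.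
  right; exists w.
  have hle : vp al be w <= vv al be w.
    apply: bm_le; first exact: vv_ge0.
    move=> z; have := bm_ge (fun w0 => D z w0 - vv al be w0) w; rewrite -/(uu al be z); lra.
  have hge := bm_ge (fun z => D z w - uu al be z) a.
  rewrite -/(vp al be w) -/(uu al be a) in hge e hle *; lra.
move=> b; case: (bm_att (fun z => D z b - uu al be z)) => [e|[a e]]; first by left.
right; exists a; rewrite -/(vp al be b) in e; lra.
Qed.

Lemma q_x al be : al <= D x y -> al - be <= D x y - D x y' -> uu al be x = D x y - al.
Proof.
move=> h1 h2; apply/eqP; rewrite eq_le; apply/andP; split.
  apply: bm_le; first lra.
  move=> w; rewrite /vv; case: eqP => [->|_]; first lra.
  case: eqP => [->|_]; first lra.
  have := bm_ge (fun z => D z w) x; rewrite -/(bcol w); lra.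
have hv : vv al be y = al by rewrite /vv eqxx.
have := bm_ge (fun w => D x w - vv al be w) y; rewrite hv -/(uu al be x); lra.
Qed.

Lemma q_x' al be : be <= D x' y' -> D x' y - D x' y' <= al - be -> uu al be x' = D x' y' - be.
Proof.
move=> h1 h2; apply/eqP; rewrite eq_le; apply/andP; split.
  apply: bm_le; first lra.
  move=> w; rewrite /vv; case: eqP => [->|_]; first lra.
  case: eqP => [->|_]; first lra.
  have := bm_ge (fun z => D z w) x'; rewrite -/(bcol w); lra.
have hv : vv al be y' = be by rewrite /vv eqxx eq_sym (negbTE hyy).
have := bm_ge (fun w => D x' w - vv al be w) y'; rewrite hv -/(uu al be x'); lra.
Qed.

Lemma four_pc_contra : False.
Proof.
have hC := hnn x y'; have hE := hnn x' y.
have [a0 [b0 [e [ha0 hb0 he0 hae [hbe hdiff1 hdiff2]]]]] := params hA hB hC hE hviol.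
pose al t := a0 + e * sp R t.
pose be t := b0 + e * (sp R t * sp R t).
have hcond : forall t : nat, [/\ 0 <= al t, 0 <= be t, al t <= D x y, be t <= D x' y' &
   al t - be t <= D x y - D x y' /\ D x' y - D x' y' <= al t - be t].
  move=> t; have [hs1 hs2] := sp_bounds R t; rewrite /al /be.
  set st := sp R t in hs1 hs2 *.
  have k1 : e * st <= e by nra.
  have k2 : 0 <= e * (st * st) by nra.
  have k3 : e * (st * st) <= e * st by nra.
  have k4 : 0 <= e * st by nra.
  split; try lra; split; lra.
pose Q t := q (al t) (be t).
pose key t := ([set z | Q t z == 0], [set ab : X * X | Q t (inl ab.1) + Q t (inr ab.2) == D ab.1 ab.2]).
pose n := (2 * #|{: {set X + X} * {set X * X}} |).+1.
have [i [j [k [hij hjk hik kij kjk]]]] := @pigeon3 _ n (fun t : 'I_n => key t) (leqnn _).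
pose S0 := fun z => z \in (key i).1.
pose S1 := fun ab => ab \in (key i).2.
have hface : forall t : nat, key t = key i -> in_face D S0 S1 (Q t).
  move=> t ht; split; first exact: q_PD.
  split.
    move=> z; rewrite /S0 -ht inE; by move/eqP.
  move=> a b; rewrite /S1 -ht inE; by move/eqP.
have hM : face_bounded D S0 S1.
  exists (\big[Num.max/0]_(ab : X * X) D ab.1 ab.2) => f [[hf0 hfD] [hS0 hS1]] z.
  have hDM : forall a b, D a b <= \big[Num.max/0]_(ab : X * X) D ab.1 ab.2.
    by move=> a b; apply: (bm_ge (fun ab : X * X => D ab.1 ab.2) (a, b)).
  have [hs1 hs2 _ _ _] := hcond i.
  have [tl tr] := q_tight hs1 hs2.
  rewrite ger0_norm; last exact: hf0.
  case: z => [a|b].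
    case: (tl a) => [e0|[b e0]].
      rewrite hS0; first exact: bm_ge0.
      by rewrite /S0 inE; apply/eqP.
    have := hS1 a b; rewrite /S1 inE /= => h.
    have := h (introT eqP e0); have := hf0 (inr b); have := hDM a b; lra.
  case: (tr b) => [e0|[a e0]].
    rewrite hS0; first exact: bm_ge0.
    by rewrite /S0 inE; apply/eqP.
  have := hS1 a b; rewrite /S1 inE /= => h.
  have := h (introT eqP e0); have := hf0 (inl a); have := hDM a b; lra.
have hind := htree hM (hface i erefl) (hface j (esym kij)) (hface k (esym (etrans kij kjk))).
apply: hind => a b hz.
have e1 := hz (inl x); have e2 := hz (inl x').
have [c1 c2 c3 c4 [c5 c6]] := hcond i.
have [d1 d2 d3 d4 [d5 d6]] := hcond j.
have [f1 f2 f3 f4 [f5 f6]] := hcond k.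
rewrite /Q /= !q_x // !q_x' // in e1 e2.
rewrite /al /be in e1 e2.
set si := sp R i in e1 e2; set sj := sp R j in e1 e2; set sk := sp R k in e1 e2.
have hne : e != 0 by rewrite gt_eqF.
have F1 : a * (sj - si) + b * (sk - si) = 0.
  apply: (mulfI hne); rewrite mulr0; nra.
have F2 : a * (sj * sj - si * si) + b * (sk * sk - si * si) = 0.
  apply: (mulfI hne); rewrite mulr0; nra.
have hsij : si != sj by apply/eqP => /sp_inj /val_inj e'; move: hij; rewrite e' eqxx.
have hsjk : sj != sk by apply/eqP => /sp_inj /val_inj e'; move: hjk; rewrite e' eqxx.
have hsik : si != sk by apply/eqP => /sp_inj /val_inj e'; move: hik; rewrite e' eqxx.
have G : b * ((sk - si) * (sk - sj)) = 0.
  have -> : b * ((sk - si) * (sk - sj)) =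
    (a * (sj * sj - si * si) + b * (sk * sk - si * si)) - (si + sj) * (a * (sj - si) + b * (sk - si)) by ring.
  by rewrite F1 F2; ring.
have hb : b = 0.
  move/eqP: G; rewrite !mulf_eq0 !subr_eq0 => /orP[/eqP //|/orP[h|h]].
    by move: hsik; rewrite eq_sym h.
  by move: hsjk; rewrite eq_sym h.
split => //.
move: F1; rewrite hb mul0r addr0 => /eqP; rewrite mulf_eq0 subr_eq0 => /orP[/eqP //|h].
by move: hsij; rewrite eq_sym h.
Qed.

End Tree4.

Lemma four_pc (R : realFieldType) (X : finType) (D : X -> X -> R) :
  (forall x y, 0 <= D x y) -> TD_is_tree D ->
  forall x y x' y', 0 < D x y -> 0 < D x' y' -> D x y + D x' y' <= D x y' + D x' y.
Proof.
move=> hnn ht x y x' y' hA hB; rewrite leNgt; apply/negP => hv.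
exact: (four_pc_contra hnn ht hA hB hv).
Qed.

Section Build.
Variables (R : realFieldType) (X : finType) (D : X -> X -> R) (l r : X -> R).
Hypothesis hdd : directed_distance D.
Hypothesis hrep : forall x y, D x y = Num.max 0 (l y - r x).

Let vals := 0 :: [seq l x | x <- enum X] ++ [seq r x | x <- enum X].
Let c := sort <=%R vals.
Let n := size c.
Let cc (i : 'I_n) := nth 0 c i.
Let E : rel 'I_n := fun i j => val j == (val i).+1.
Let alpha (i j : 'I_n) := cc j - cc i.
Let F x := [set i : 'I_n | (l x <= cc i) && (cc i <= r x)].
Let s := enum 'I_n.

Lemma c_sorted : sorted <=%R c.
Proof. rewrite /c; apply: sort_sorted => a b; exact: le_total. Qed.

Lemma c_mono i j : (i <= j)%N -> (j < n)%N -> nth 0 c i <= nth 0 c j.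
Proof.
move=> hij hj; apply: (sorted_leq_nth le_trans lexx) => //; first exact: c_sorted.
  rewrite inE; lia.
Qed.

Lemma lr x : l x <= r x.
Proof. have := max0_ge (l x - r x); rewrite -hrep hdd.2; lra. Qed.

Lemma mem_c v : v \in vals -> exists i : 'I_n, cc i = v.
Proof.
move=> hv; have hv' : v \in c by rewrite mem_sort.
have hi : (index v c < n)%N by rewrite index_mem.
exists (Ordinal hi).
by rewrite /cc /= nth_index.
Qed.

Lemma l_in x : exists i : 'I_n, cc i = l x.
Proof.
apply: mem_c; rewrite /vals inE mem_cat; apply/orP; right; apply/orP; left.
apply: map_f; exact: mem_enum.
Qed.

Lemma r_in x : exists i : 'I_n, cc i = r x.
Proof.
apply: mem_c; rewrite /vals inE mem_cat; apply/orP; right; apply/orP; right.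
apply: map_f; exact: mem_enum.
Qed.

Lemma n_gt0 : (0 < n)%N.
Proof. by rewrite /n /c size_sort. Qed.

Lemma Hu : uniq s.
Proof. exact: enum_uniq. Qed.

Lemma Hall : forall v : 'I_n, v \in s.
Proof. move=> v; exact: mem_enum. Qed.

Lemma nth_s (u : 'I_n) m : (m < n)%N -> val (nth u s m) = m.
Proof. move=> hm; exact: nth_enum_ord. Qed.

Lemma HE : forall u v, E u v <-> exists i, (i.+1 < size s)%N /\ nth u s i = u /\ nth u s i.+1 = v.
Proof.
move=> u v; rewrite /s size_enum_ord; split.
  move/eqP=> h; exists (val u); split; first by rewrite -h ltn_ord.
  split; apply: val_inj; rewrite nth_s //; [exact: ltn_ord|by rewrite -h ltn_ord].
move=> [i [hi [h1 h2]]]; rewrite /E -h1 -h2 !nth_s //; lia.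
Qed.

Lemma idxE (v : 'I_n) : index v s = val v.
Proof.
have h := nth_index v (Hall v).
have hl : (index v s < n)%N by rewrite -{2}(size_enum_ord n) index_mem Hall.
by rewrite -{2}h nth_s.
Qed.

Lemma Ha : forall a b, E a b -> 0 <= alpha a b.
Proof.
move=> a b /eqP h; rewrite /alpha /cc; have := c_mono (i := a) (j := b); rewrite h => hm.
have hb : ((val a).+1 < n)%N by rewrite -h ltn_ord.
have hb' : nth 0 c b = nth 0 c (val a).+1 by rewrite -h.
have := hm (leqnSn _) hb; lra.
Qed.

Lemma posE x0 (v : 'I_n) : pos s x0 alpha v = cc v - cc (Ordinal n_gt0).
Proof.
rewrite /pos idxE -(big_mkord xpredT (fun k => alpha (nth x0 s k) (nth x0 s k.+1))).
rewrite (telescope_sumr_eq (fun k => nth 0 c k)) //.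
move=> k hk; have hv : (val v < n)%N := ltn_ord v; rewrite /alpha /cc !nth_s //; lia.
Qed.

Lemma td (x0 : 'I_n) (u w : 'I_n) d : tree_dist E alpha u w d <-> d = Num.max 0 (cc w - cc u).
Proof.
rewrite (tree_dist_iff x0 Hu Hall HE Ha) !posE.
by have -> : cc w - cc (Ordinal n_gt0) - (cc u - cc (Ordinal n_gt0)) = cc w - cc u by ring.
Qed.

Lemma real_of_rep_aux : oriented_tree_realisation D E alpha F /\ directed_path E.
Proof.
pose x0 := Ordinal n_gt0.
split; last first.
  exists s; split; first exact: Hu.
  split; first exact: Hall.
  exact: HE.
split.
  split; first by rewrite card_ord n_gt0.
  split; first by move=> u; rewrite /E; apply/eqP; lia.
  split; first by move=> u v; apply/negP => /andP[/eqP h1 /eqP h2]; lia.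
  move=> u w; have [p [hp _]] := canon x0 Hu Hall HE Ha u w.
  exists p; split => // q hq; exact: (upath_uniq x0 Hu Hall HE hq hp).
split; first exact: Ha.
split.
  move=> x; split.
    apply/set0Pn; have [i hi] := l_in x; exists i.
    by rewrite inE hi lexx lr.
  move=> u w hu hw; have [p [hp _]] := canon x0 Hu Hall HE Ha u w.
  exists p; split => //; apply/allP => v hv.
  have := upath_between x0 Hu Hall HE hp hv; rewrite !idxE => /andP[h1 h2].
  move: hu hw; rewrite !inE => /andP[hu1 hu2] /andP[hw1 hw2].
  apply/andP; split.
    have h1' : (minn u w <= v)%N := h1.
    have := c_mono h1' (ltn_ord v); move: hu1 hw1; rewrite /cc /minn; case: ifP => _ ; lra.
  have h2' : (v <= maxn u w)%N := h2.
  have hmax : (maxn u w < n)%N by rewrite gtn_max !ltn_ord.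
  have := c_mono h2' hmax; move: hu2 hw2; rewrite /cc /maxn; case: ifP => _ ; lra.
move=> x y.
have [u hu] := r_in x; have [w hw] := l_in y.
split.
  exists u, w; split; first by rewrite inE hu lexx lr.
  split; first by rewrite inE hw lexx lr.
  by apply/(td x0); rewrite hu hw hrep.
move=> u' w' d' hu' hw' /(td x0) ->.
rewrite hrep; apply: max0_mono.
move: hu' hw'; rewrite !inE => /andP[_ h1] /andP[h2 _]; lra.
Qed.

End Build.

Lemma real_of_rep (R : realFieldType) (X : finType) (D : X -> X -> R) (l r : X -> R) :
  directed_distance D -> (forall x y, D x y = Num.max 0 (l y - r x)) ->
  exists (V : finType) (E : rel V) (alpha : V -> V -> R) (F : X -> {set V}),
     oriented_tree_realisation D E alpha F /\ directed_path E.
Proof.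
move=> hdd hrep; eexists; eexists; eexists; eexists; exact: (real_of_rep_aux hdd hrep).
Qed.

Unset Implicit Arguments.
Theorem mainTheorem12 (R : realFieldType) (X : finType) (D : X -> X -> R) :
  directed_distance D ->
  (TD_is_tree D <->
   exists (V : finType) (E : rel V) (alpha : V -> V -> R) (F : X -> {set V}),
     oriented_tree_realisation D E alpha F /\ directed_path E).
Proof.
move=> hdd; split.
  move=> ht.
  have h4 := four_pc hdd.1 ht.
  have [l [r hrep]] := rep_of_4pc hdd.1 h4.
  exact: real_of_rep hdd hrep.
move=> [V [E [alpha [F [hreal hdp]]]]].
have [l [r hrep]] := rep_of_real hreal hdp.
exact: tree_of_rep hrep.
Qed.
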